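(* Let $\alpha\in(0,1)$ and let $\{x_i\}_{i=1}^{\infty}$ be any countable subset of $SU(2)$. Then there exists a real-valued function $f\in\mathrm{Lip}_{\alpha}(SU(2))$ such that \[ \sup_{N\geq 1}|S_N f(x_i)|=\infty \quad\text{for all } i=1,2,3,\ldots. \]
   Context: $SU(2)$ is the group of $2\times 2$ complex unitary matrices of determinant $1$, equipped with the metric $d(x,y)=\sqrt{\tfrac12\mathrm{tr}((x-y)(x-y)^* )}$. For $0<\alpha<1$, $\mathrm{Lip}_{\alpha}(SU(2))$ is the set of real functions $f$ on $SU(2)$ for which there is $M\ge 0$ with $|f(x)-f(y)|\le M d(x,y)^{\alpha}$ for all $x,y\in SU(2)$. Let $\mu$ be normalized Haar measure on $SU(2)$. For each $x\in SU(2)$ with eigenvalues $e^{\pm i\theta}$, $\theta\in[0,\pi]$, the character of the $(n+1)$-dimensional irreducible unitary representation is $\chi_n(x)=\frac{\sin((n+1)\theta)}{\sin\theta}$ (interpreted by continuity at $\theta=0,\pi$). The Dirichlet kernel is $\mathbf{D}_N(x)=\sum_{n=0}^N (n+1)\chi_n(x)$, and for $f\in L^1(SU(2))$ the $N$th Fourier partial sum is $S_Nf(x)=(f*\mathbf{D}_N)(x)=\int_{SU(2)} f(xy^{-1})\mathbf{D}_N(y)\,d\mu(y)$. *)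

(* Defs.v *)
From Stdlib Require Import Reals Lra Psatz.
From Coquelicot Require Import Coquelicot.
Open Scope R_scope.

Definition csq (z : C) : R := (fst z) ^ 2 + (snd z) ^ 2.

(* An element of SU(2) is a matrix [[a, -conj b], [b, conj a]] with
   |a|^2 + |b|^2 = 1 (this is exactly the set of 2x2 complex unitary
   matrices of determinant 1).  We store the pair (a, b). *)
Record SU2 := mkSU2 { su_a : C ; su_b : C ; su_unit : csq su_a + csq su_b = 1 }.

Lemma su2_mul_unit (x y : SU2) :
  csq (Cminus (Cmult (su_a x) (su_a y)) (Cmult (Cconj (su_b x)) (su_b y)))
  + csq (Cplus (Cmult (su_b x) (su_a y)) (Cmult (Cconj (su_a x)) (su_b y))) = 1.
Proof.
  destruct x as [[a1 a2] [b1 b2] Hx]; destruct y as [[c1 c2] [d1 d2] Hy].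
  unfold csq in *; unfold Cminus, Cplus, Cmult, Cconj, Copp in *; cbn [fst snd su_a su_b] in *.
  transitivity ((a1 ^ 2 + a2 ^ 2 + (b1 ^ 2 + b2 ^ 2)) * (c1 ^ 2 + c2 ^ 2 + (d1 ^ 2 + d2 ^ 2))).
  - ring.
  - rewrite Hx, Hy; ring.
Qed.

(* Matrix product: [[a,-conj b],[b,conj a]] [[c,-conj d],[d,conj c]] has first column
   (a c - conj(b) d, b c + conj(a) d). *)
Definition su2_mul (x y : SU2) : SU2 :=
  mkSU2 _ _ (su2_mul_unit x y).

Lemma su2_inv_unit (x : SU2) : csq (Cconj (su_a x)) + csq (Copp (su_b x)) = 1.
Proof.
  destruct x as [[a1 a2] [b1 b2] Hx]; unfold csq in *; unfold Cconj, Copp in *; cbn [fst snd su_a su_b] in *.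
  rewrite <- Hx; ring.
Qed.

(* Inverse = conjugate transpose [[conj a, conj b], [-b, a]]. *)
Definition su2_inv (x : SU2) : SU2 := mkSU2 _ _ (su2_inv_unit x).

(* d(x,y) = sqrt(1/2 tr((x-y)(x-y)^H)) = sqrt(|a-c|^2 + |b-d|^2). *)
Definition su2_dist (x y : SU2) : R :=
  sqrt (csq (Cminus (su_a x) (su_a y)) + csq (Cminus (su_b x) (su_b y))).

(* d^alpha, with 0^alpha = 0 (alpha > 0). *)
Definition hpow (d alpha : R) : R :=
  if Req_EM_T d 0 then 0 else Rpower d alpha.

Definition Lip (alpha : R) (f : SU2 -> R) : Prop :=
  exists M : R, 0 <= M /\
    forall x y : SU2, Rabs (f x - f y) <= M * hpow (su2_dist x y) alpha.

(* Eigenvalues of x are e^{+-i theta}, theta in [0,pi]; tr x = 2 Re a = 2 cos theta. *)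
Definition su2_angle (x : SU2) : R := acos (fst (su_a x)).

(* chi_n(x) = sin((n+1)theta)/sin theta, extended by continuity at 0, pi. *)
Definition chi (n : nat) (x : SU2) : R :=
  let th := su2_angle x in
  if Req_EM_T th 0 then INR (n + 1)
  else if Req_EM_T th PI then (-1) ^ n * INR (n + 1)
  else sin (INR (n + 1) * th) / sin th.

Definition dirichlet (N : nat) (x : SU2) : R :=
  sum_f_R0 (fun n => INR (n + 1) * chi n x) N.

Lemma hopf_unit (e t1 t2 : R) :
  csq (cos e * cos t1, cos e * sin t1) + csq (sin e * cos t2, sin e * sin t2) = 1.
Proof.
  unfold csq; simpl.
  pose proof (sin2_cos2 e); pose proof (sin2_cos2 t1); pose proof (sin2_cos2 t2).
  unfold Rsqr in *.
  transitivity (cos e * cos e * (sin t1 * sin t1 + cos t1 * cos t1)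
                + sin e * sin e * (sin t2 * sin t2 + cos t2 * cos t2)); [ring|].
  rewrite H0, H1; lra.
Qed.

(* Hopf coordinates: a = cos(eta) e^{i t1}, b = sin(eta) e^{i t2},
   eta in [0, pi/2], t1, t2 in [0, 2 pi]. *)
Definition hopf (e t1 t2 : R) : SU2 := mkSU2 _ _ (hopf_unit e t1 t2).

(* Integral against normalized Haar measure on SU(2) (= normalized uniform
   measure on S^3), written in Hopf coordinates, where the volume element is
   sin(eta) cos(eta) d eta dt1 dt2 and the total volume is 2 pi^2. *)
Definition haar_int (g : SU2 -> R) : R :=
  / (2 * PI ^ 2) *
  RInt (fun e =>
    RInt (fun t1 =>
      RInt (fun t2 => g (hopf e t1 t2) * (sin e * cos e)) 0 (2 * PI)) 0 (2 * PI))
    0 (PI / 2).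

(* S_N f (x) = (f * D_N)(x) = int f(x y^{-1}) D_N(y) dmu(y) *)
Definition partial_sum (N : nat) (f : SU2 -> R) (x : SU2) : R :=
  haar_int (fun y => f (su2_mul x (su2_inv y)) * dirichlet N y).

(* Main.v *)
Require Import Defs.
From Stdlib Require Import Reals Lra Lia Psatz FunctionalExtensionality List ZArith ClassicalEpsilon Cantor.
From Coquelicot Require Import Coquelicot.
Open Scope R_scope.


Lemma unit_comp (y : SU2) :
  (fst (su_a y))^2 + (snd (su_a y))^2 + (fst (su_b y))^2 + (snd (su_b y))^2 = 1.
Proof. destruct y as [[a1 a2] [b1 b2] H]; unfold csq in H; simpl in *; lra. Qed.

Lemma re_bound (y : SU2) : -1 <= fst (su_a y) <= 1.
Proof.
  pose proof (unit_comp y).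
  set (s := fst (su_a y)) in *.
  assert (s^2 <= 1) by nra. split; nra.
Qed.

Lemma dist_sq (z z' : SU2) : su2_dist z z' = sqrt
  ((fst (su_a z) - fst (su_a z'))^2 + (snd (su_a z) - snd (su_a z'))^2 +
   (fst (su_b z) - fst (su_b z'))^2 + (snd (su_b z) - snd (su_b z'))^2).
Proof.
  unfold su2_dist, csq, Cminus, Cplus, Copp; simpl. f_equal. ring.
Qed.

Lemma dist_ge0 z z' : 0 <= su2_dist z z'.
Proof. unfold su2_dist; apply sqrt_pos. Qed.

Lemma re_lip (z z' : SU2) : Rabs (fst (su_a z) - fst (su_a z')) <= su2_dist z z'.
Proof.
  rewrite dist_sq. rewrite <- sqrt_Rsqr_abs. apply sqrt_le_1_alt.
  unfold Rsqr. simpl. pose proof (pow2_ge_0 (snd (su_a z) - snd (su_a z'))).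
  pose proof (pow2_ge_0 (fst (su_b z) - fst (su_b z'))).
  pose proof (pow2_ge_0 (snd (su_b z) - snd (su_b z'))). lra.
Qed.

Lemma dist_le2 z z' : su2_dist z z' <= 2.
Proof.
  rewrite dist_sq. pose proof (unit_comp z); pose proof (unit_comp z').
  rewrite <- (sqrt_square 2) by lra. apply sqrt_le_1_alt.
  pose proof (pow2_ge_0 (fst (su_a z) + fst (su_a z'))).
  pose proof (pow2_ge_0 (snd (su_a z) + snd (su_a z'))).
  pose proof (pow2_ge_0 (fst (su_b z) + fst (su_b z'))).
  pose proof (pow2_ge_0 (snd (su_b z) + snd (su_b z'))). nra.
Qed.

Lemma mul_iso (x y y' : SU2) : su2_dist (su2_mul x y) (su2_mul x y') = su2_dist y y'.
Proof.
  rewrite !dist_sq. f_equal. pose proof (unit_comp x) as Hx.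
  destruct x as [[a1 a2] [b1 b2] ?]; destruct y as [[c1 c2] [d1 d2] ?];
  destruct y' as [[e1 e2] [f1 f2] ?]; unfold su2_mul, Cminus, Cplus, Cmult, Cconj, Copp in *; cbn [fst snd su_a su_b] in *.
  transitivity ((a1^2+a2^2+b1^2+b2^2) * ((c1 - e1) ^ 2 + (c2 - e2) ^ 2 + (d1 - f1) ^ 2 + (d2 - f2) ^ 2)).
  - ring.
  - rewrite Hx; ring.
Qed.

Lemma inv_iso (y y' : SU2) : su2_dist (su2_inv y) (su2_inv y') = su2_dist y y'.
Proof.
  rewrite !dist_sq. f_equal. destruct y as [[c1 c2] [d1 d2] ?];
  destruct y' as [[e1 e2] [f1 f2] ?]; unfold su2_inv, Cconj, Copp; simpl. ring.
Qed.

Lemma re_inv_mul (x w : SU2) :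
  fst (su_a (su2_mul (su2_inv x) (su2_mul x w))) = fst (su_a w).
Proof.
  pose proof (unit_comp x) as Hx.
  destruct x as [[a1 a2] [b1 b2] ?]; destruct w as [[c1 c2] [d1 d2] ?];
  unfold su2_mul, su2_inv, Cminus, Cplus, Cmult, Cconj, Copp in *; cbn [fst snd su_a su_b] in *.
  transitivity ((a1^2+a2^2+b1^2+b2^2) * c1); [ring|rewrite Hx; ring].
Qed.

Lemma re_inv (y : SU2) : fst (su_a (su2_inv y)) = fst (su_a y).
Proof. destruct y as [[c1 c2] [d1 d2] ?]; reflexivity. Qed.

Fixpoint pe (l : list R) (s : R) : R :=
  match l with nil => 0 | a :: l' => a + s * pe l' s end.

Definition IsPoly (F : R -> R) := exists l, forall s, F s = pe l s.

Lemma poly_const c : IsPoly (fun _ => c).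
Proof. exists (c :: nil); intro; simpl; ring. Qed.

Lemma poly_xmul F : IsPoly F -> IsPoly (fun s => s * F s).
Proof. intros [l Hl]; exists (0 :: l); intro s; simpl; rewrite Hl; ring. Qed.

Fixpoint padd (l m : list R) : list R :=
  match l, m with
  | nil, _ => m
  | _, nil => l
  | a :: l', b :: m' => (a + b) :: padd l' m'
  end.

Lemma pe_padd l m s : pe (padd l m) s = pe l s + pe m s.
Proof.
  revert m; induction l as [|a l IH]; intros [|b m]; simpl; try ring.
  rewrite IH; ring.
Qed.

Lemma poly_plus F G : IsPoly F -> IsPoly G -> IsPoly (fun s => F s + G s).
Proof. intros [l Hl] [m Hm]; exists (padd l m); intro s; rewrite pe_padd, Hl, Hm; ring. Qed.

Lemma poly_scal c F : IsPoly F -> IsPoly (fun s => c * F s).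
Proof.
  intros [l Hl]; exists (map (fun a => c * a) l); intro s; rewrite Hl.
  clear Hl. induction l as [|a l IH]; simpl. ring. rewrite <- IH; ring.
Qed.

Lemma poly_ext F G : (forall s, F s = G s) -> IsPoly F -> IsPoly G.
Proof. intros H [l Hl]; exists l; intro s; rewrite <- H; auto. Qed.

Lemma poly_mult F G : IsPoly F -> IsPoly G -> IsPoly (fun s => F s * G s).
Proof.
  intros [l Hl] HG. apply (poly_ext (fun s => pe l s * G s)); [intro; rewrite Hl; auto|].
  clear Hl. induction l as [|a l IH]; simpl.
  - apply (poly_ext (fun _ => 0)); [intro; ring| apply poly_const].
  - apply (poly_ext (fun s => a * G s + s * (pe l s * G s))); [intro; ring|].
    apply poly_plus; [apply poly_scal; auto| apply poly_xmul; auto].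
Qed.

Lemma poly_sum (F : nat -> R -> R) N : (forall n, IsPoly (F n)) ->
  IsPoly (fun s => sum_f_R0 (fun n => F n s) N).
Proof.
  intro H; induction N; simpl; auto. apply poly_plus; auto.
Qed.

Lemma pe_lip l : exists K B, 0 <= K /\ 0 <= B /\ forall s s', -1 <= s <= 1 -> -1 <= s' <= 1 ->
  Rabs (pe l s - pe l s') <= K * Rabs (s - s') /\ Rabs (pe l s) <= B.
Proof.
  induction l as [|a l IH]; simpl.
  - exists 0, 0. split; [lra|]. split; [lra|]. intros s0 s1 _ _.
    replace (0-0) with 0 by ring; rewrite Rabs_R0; pose proof (Rabs_pos (s0-s1)); split; lra.
  - destruct IH as [K [B [HK [HB H]]]]. exists (K + B), (Rabs a + B).
    split; [lra|]. split; [pose proof (Rabs_pos a); lra|]. intros s s' Hs Hs'. split.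
    + destruct (H s s' Hs Hs') as [H1 H2].
      destruct (H s' s' Hs' Hs') as [_ H3].
      replace (a + s * pe l s - (a + s' * pe l s')) with
        (s * (pe l s - pe l s') + (s - s') * pe l s') by ring.
      eapply Rle_trans; [apply Rabs_triang|]. rewrite !Rabs_mult.
      assert (Rabs s <= 1) by (apply Rabs_le; lra).
      pose proof (Rabs_pos (pe l s - pe l s')). pose proof (Rabs_pos (s - s')).
      pose proof (Rabs_pos s). pose proof (Rabs_pos (pe l s')).
      nra.
    + destruct (H s s Hs Hs) as [_ H2].
      eapply Rle_trans; [apply Rabs_triang|]. rewrite Rabs_mult.
      assert (Rabs s <= 1) by (apply Rabs_le; lra).
      pose proof (Rabs_pos s). pose proof (Rabs_pos (pe l s)). nra.
Qed.

Lemma poly_lip F : IsPoly F -> exists K B, 0 <= K /\ 0 <= B /\ forall s s', -1 <= s <= 1 -> -1 <= s' <= 1 ->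
  Rabs (F s - F s') <= K * Rabs (s - s') /\ Rabs (F s) <= B.
Proof. intros [l Hl]. destruct (pe_lip l) as [K [B H]]. exists K, B.
  destruct H as [HK [HB H]]. split; [auto|]. split; [auto|]. intros s s' Hs Hs'.
  rewrite !Hl; apply H; auto. Qed.

Lemma nat_ind2 (P : nat -> Prop) : P 0%nat -> P 1%nat ->
  (forall n, P n -> P (S n) -> P (S (S n))) -> forall n, P n.
Proof.
  intros H0 H1 HS n. assert (P n /\ P (S n)); [|tauto].
  induction n; [auto|]. destruct IHn; split; auto.
Qed.

Fixpoint Tf (n : nat) (s : R) : R :=
  match n with 0 => 1 | S m => match m with 0 => s | S k => 2 * s * Tf m s - Tf k s end end.
Fixpoint Uf (n : nat) (s : R) : R :=
  match n with 0 => 1 | S m => match m with 0 => 2 * s | S k => 2 * s * Uf m s - Uf k s end end.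

Lemma Tf_SS n s : Tf (S (S n)) s = 2 * s * Tf (S n) s - Tf n s.
Proof. reflexivity. Qed.
Lemma Uf_SS n s : Uf (S (S n)) s = 2 * s * Uf (S n) s - Uf n s.
Proof. reflexivity. Qed.

Lemma Tf_poly n : IsPoly (Tf n).
Proof.
  induction n using nat_ind2.
  - apply poly_const.
  - apply (poly_ext (fun s => s * 1)); [intro; simpl; ring|]. apply poly_xmul, poly_const.
  - apply (poly_ext (fun s => 2 * (s * Tf (S n) s) + (-1) * Tf n s)); [intro; rewrite Tf_SS; ring|].
    apply poly_plus; apply poly_scal; auto. apply poly_xmul; auto.
Qed.

Lemma Uf_poly n : IsPoly (Uf n).
Proof.
  induction n using nat_ind2.
  - apply poly_const.
  - apply (poly_ext (fun s => 2 * (s * 1))); [intro; simpl; ring|]. apply poly_scal, poly_xmul, poly_const.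
  - apply (poly_ext (fun s => 2 * (s * Uf (S n) s) + (-1) * Uf n s)); [intro; rewrite Uf_SS; ring|].
    apply poly_plus; apply poly_scal; auto. apply poly_xmul; auto.
Qed.

Lemma cos_rec n t : cos (INR (S (S n)) * t) = 2 * cos t * cos (INR (S n) * t) - cos (INR n * t).
Proof.
  rewrite !S_INR.
  replace ((INR n + 1 + 1) * t) with ((INR n + 1) * t + t) by ring.
  replace (INR n * t) with ((INR n + 1) * t - t) by ring.
  rewrite cos_plus, cos_minus. ring.
Qed.

Lemma sin_rec n t : sin (INR (S (S n)) * t) = 2 * cos t * sin (INR (S n) * t) - sin (INR n * t).
Proof.
  rewrite !S_INR.
  replace ((INR n + 1 + 1) * t) with ((INR n + 1) * t + t) by ring.
  replace (INR n * t) with ((INR n + 1) * t - t) by ring.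
  rewrite sin_plus, sin_minus. ring.
Qed.

Lemma Tf_cos n t : Tf n (cos t) = cos (INR n * t).
Proof.
  induction n using nat_ind2.
  - simpl. rewrite Rmult_0_l, cos_0; auto.
  - simpl. rewrite Rmult_1_l; auto.
  - rewrite Tf_SS, cos_rec, IHn, IHn0; ring.
Qed.

Lemma Uf_sin n t : Uf n (cos t) * sin t = sin (INR (S n) * t).
Proof.
  induction n using nat_ind2.
  - simpl. rewrite !Rmult_1_l; auto.
  - simpl Uf. replace (INR 2 * t) with (2 * t) by (simpl; ring). rewrite sin_2a. ring.
  - rewrite Uf_SS. rewrite sin_rec.
    rewrite <- IHn, <- IHn0. ring.
Qed.

Lemma Uf_1 n : Uf n 1 = INR (S n).
Proof.
  induction n using nat_ind2; [simpl; ring| simpl; ring|].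
  rewrite Uf_SS, IHn, IHn0. rewrite !S_INR. ring.
Qed.

Lemma Uf_m1 n : Uf n (-1) = (-1) ^ n * INR (S n).
Proof.
  induction n using nat_ind2; [simpl; ring| simpl; ring|].
  rewrite Uf_SS, IHn, IHn0. rewrite !S_INR. simpl. ring.
Qed.

Lemma chi_U n y : chi n y = Uf n (fst (su_a y)).
Proof.
  unfold chi, su2_angle. pose proof (re_bound y) as Hb. set (s := fst (su_a y)) in *.
  pose proof (cos_acos s Hb) as Hc. pose proof (acos_bound s) as Ha.
  rewrite Nat.add_1_r.
  destruct (Req_EM_T (acos s) 0) as [E|E].
  - rewrite E, cos_0 in Hc. rewrite <- Hc, Uf_1; auto.
  - destruct (Req_EM_T (acos s) PI) as [E2|E2].
    + rewrite E2, cos_PI in Hc. rewrite <- Hc, Uf_m1; auto.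
    + assert (0 < sin (acos s)) by (apply sin_gt_0; lra).
      rewrite <- (Uf_sin n (acos s)). rewrite Hc. field. lra.
Qed.

Lemma sin_mult_bound n t : Rabs (sin (INR (S n) * t)) <= INR (S n) * Rabs (sin t).
Proof.
  induction n.
  - simpl; rewrite Rmult_1_l; lra.
  - replace (INR (S (S n)) * t) with (INR (S n) * t + t) by (rewrite (S_INR (S n)); ring).
    rewrite sin_plus. eapply Rle_trans; [apply Rabs_triang|]. rewrite !Rabs_mult.
    pose proof (COS_bound t); pose proof (COS_bound (INR (S n) * t)).
    assert (Rabs (cos t) <= 1) by (apply Rabs_le; lra).
    assert (Rabs (cos (INR (S n) * t)) <= 1) by (apply Rabs_le; lra).
    pose proof (Rabs_pos (sin t)). pose proof (Rabs_pos (sin (INR (S n) * t))).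
    pose proof (Rabs_pos (cos t)). pose proof (Rabs_pos (cos (INR (S n) * t))).
    rewrite (S_INR (S n)). nra.
Qed.

Lemma chi_bound n y : Rabs (chi n y) <= INR (n + 1).
Proof.
  unfold chi; cbv zeta. pose proof (pos_INR (n+1)).
  destruct (Req_EM_T (su2_angle y) 0).
  - rewrite Rabs_right; lra.
  - destruct (Req_EM_T (su2_angle y) PI).
    + rewrite Rabs_mult, pow_1_abs, Rabs_right; lra.
    + unfold su2_angle in *. pose proof (acos_bound (fst (su_a y))).
      assert (0 < sin (acos (fst (su_a y)))) by (apply sin_gt_0; lra).
      unfold Rdiv; rewrite Rabs_mult, Rabs_inv, (Rabs_right (sin (acos (fst (su_a y))))) by lra.
      rewrite Nat.add_1_r. pose proof (sin_mult_bound n (acos (fst (su_a y)))) as Hm.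
      rewrite (Rabs_right (sin (acos (fst (su_a y))))) in Hm by lra.
      apply (Rmult_le_reg_r (sin (acos (fst (su_a y))))); auto.
      rewrite Rmult_assoc, Rinv_l by lra. lra.
Qed.

Definition DP (N : nat) (s : R) : R := sum_f_R0 (fun n => INR (n + 1) * Uf n s) N.

Lemma DP_poly N : IsPoly (DP N).
Proof. apply poly_sum. intro n. apply poly_scal, Uf_poly. Qed.

Lemma dirichlet_DP N y : dirichlet N y = DP N (fst (su_a y)).
Proof.
  unfold dirichlet, DP. induction N; cbn [sum_f_R0]; rewrite ?IHN, chi_U; auto.
Qed.

Definition BN (N : nat) : R := sum_f_R0 (fun n => INR (n + 1) ^ 2) N.

Lemma BN_ge0 N : 0 <= BN N.
Proof.
  unfold BN; induction N; cbn [sum_f_R0].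
  - pose proof (pos_INR (0 + 1)); nra.
  - pose proof (pos_INR (S N + 1)). nra.
Qed.

Lemma dirichlet_bound N y : Rabs (dirichlet N y) <= BN N.
Proof.
  unfold dirichlet, BN. induction N; cbn [sum_f_R0].
  - rewrite Rabs_mult, Rabs_right by (apply Rle_ge, pos_INR).
    pose proof (chi_bound 0 y). pose proof (pos_INR (0+1)). nra.
  - eapply Rle_trans; [apply Rabs_triang|].
    rewrite Rabs_mult, (Rabs_right (INR _)) by (apply Rle_ge, pos_INR).
    pose proof (chi_bound (S N) y). pose proof (pos_INR (S N+1)). nra.
Qed.

Lemma pe_derive l x : ex_derive (pe l) x.
Proof.
  induction l as [|a l IH]; simpl.
  - apply ex_derive_const.
  - apply (ex_derive_plus (fun _ => a) (fun s => s * pe l s)); [apply ex_derive_const|].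
    apply (ex_derive_mult (fun s => s) (pe l)); [apply ex_derive_id| auto].
Qed.

Lemma ex_RInt_d (f : R -> R) a b : (forall x, ex_derive f x) -> ex_RInt f a b.
Proof. intros H; apply (@ex_RInt_continuous R_CompleteNormedModule); intros; apply (@ex_derive_continuous R_AbsRing R_NormedModule); auto. Qed.

Lemma is_RInt_plusR (f g : R -> R) a b If Ig : is_RInt f a b If -> is_RInt g a b Ig ->
  is_RInt (fun x => f x + g x) a b (If + Ig).
Proof. intros; apply (@is_RInt_plus R_NormedModule); auto. Qed.
Lemma is_RInt_minusR (f g : R -> R) a b If Ig : is_RInt f a b If -> is_RInt g a b Ig ->
  is_RInt (fun x => f x - g x) a b (If - Ig).
Proof. intros; apply (@is_RInt_minus R_NormedModule); auto. Qed.
Lemma is_RInt_scalR (f : R -> R) a b k If : is_RInt f a b If ->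
  is_RInt (fun x => k * f x) a b (k * If).
Proof. intros; apply (@is_RInt_scal R_NormedModule); auto. Qed.
Lemma is_RInt_constR a b v : is_RInt (fun _ => v) a b ((b - a) * v).
Proof. apply (@is_RInt_const R_NormedModule). Qed.
Lemma is_RInt_extR (f g : R -> R) a b (l l' : R) : (forall x, f x = g x) -> l = l' -> is_RInt f a b l -> is_RInt g a b l'.
Proof. intros H E I; subst l'; apply (@is_RInt_ext R_NormedModule f); auto. Qed.

Ltac fixeq := match goal with |- @eq _ ?a ?b => change (@eq R a b) end.

Lemma contR (f : R -> R) x : ex_derive f x -> continuous f x.
Proof. apply (@ex_derive_continuous R_AbsRing R_NormedModule). Qed.
Lemma is_RInt_deriveR (f df : R -> R) a b : (forall x, is_derive f x (df x)) ->
  (forall x, ex_derive df x) -> is_RInt df a b (f b - f a).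
Proof.
  intros H1 H2. apply (@is_RInt_derive R_CompleteNormedModule); intros; auto. apply contR; auto.
Qed.

Lemma is_RInt_zero a b : is_RInt (fun _ => 0) a b 0.
Proof. eapply is_RInt_extR; [| | apply (is_RInt_constR a b 0)]; intros; simpl; ring. Qed.

Definition W (k : nat) : R := RInt (fun t => cos t ^ k) 0 (2 * PI).

Lemma W_is k : is_RInt (fun t => cos t ^ k) 0 (2 * PI) (W k).
Proof. apply (@RInt_correct R_CompleteNormedModule), ex_RInt_d. intro; auto_derive; auto. Qed.

Lemma INR_k2 k : 0 < INR (k + 2).
Proof. rewrite plus_INR; simpl; pose proof (pos_INR k); lra. Qed.

Lemma M1 k : is_RInt (fun e => cos e ^ (S k) * sin e) 0 (PI / 2) (/ INR (k + 2)).
Proof.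
  pose proof (INR_k2 k) as Hk.
  set (F := fun e => - cos e ^ (S (S k)) / INR (k + 2)).
  replace (/ INR (k + 2)) with (F (PI/2) - F 0).
  - apply (is_RInt_deriveR F).
    + intros x. unfold F. auto_derive; auto.
      change (match k with 0%nat => 1 | S _ => INR k + 1 end) with (INR (S k)).
      rewrite plus_INR, S_INR. simpl. rewrite plus_INR in Hk; simpl in Hk. fixeq. field. lra.
    + intros x. auto_derive; auto.
  - unfold F. rewrite cos_PI2, cos_0, pow1, pow_i by lia. field. lra.
Qed.

Lemma M2 k : is_RInt (fun t => cos t ^ k * sin t ^ 2) 0 (2 * PI) (W k / INR (k + 2)).
Proof.
  pose proof (INR_k2 k) as Hk.
  set (H := fun t => cos t ^ (S k) * sin t).
  set (dH := fun t => cos t ^ k - INR (k + 2) * (cos t ^ k * sin t ^ 2)).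
  assert (I1 : is_RInt dH 0 (2 * PI) (H (2 * PI) - H 0)).
  { apply (is_RInt_deriveR H).
    + intros x. unfold H, dH. auto_derive; auto.
      change (match k with 0%nat => 1 | S _ => INR k + 1 end) with (INR (S k)).
      rewrite plus_INR, S_INR. simpl. fixeq. pose proof (sin2_cos2 x). unfold Rsqr in H0.
      apply Rminus_diag_uniq. transitivity (cos x ^ k * (sin x * sin x + cos x * cos x - 1));
      [ring | rewrite H0; ring].
    + intros x. unfold dH. auto_derive; auto. }
  assert (E : H (2 * PI) - H 0 = 0).
  { unfold H. rewrite sin_2PI, sin_0. ring. }
  rewrite E in I1.
  pose proof (is_RInt_minusR _ _ _ _ _ _ (W_is k) I1) as I2.
  pose proof (is_RInt_scalR _ _ _ (/ INR (k + 2)) _ I2) as I3.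
  eapply is_RInt_extR; [| | exact I3].
  all: try intros x; unfold dH; cbv beta; fixeq; field; pose proof (INR_k2 k); lra.
Qed.

Fixpoint Aval (l : list R) (p : nat) (c : R) : R :=
  match l with nil => 0 | a :: l' => a * c ^ p * W p + Aval l' (S p) c end.
Fixpoint Bval (l : list R) (p : nat) : R :=
  match l with nil => 0 | a :: l' => a * W p / INR (p + 2) + Bval l' (S p) end.

Lemma L1 l : forall p c, is_RInt (fun t => (c * cos t) ^ p * pe l (c * cos t)) 0 (2 * PI) (Aval l p c).
Proof.
  induction l as [|a l IH]; intros p c; simpl.
  - eapply is_RInt_extR; [| | apply is_RInt_zero]; intros; simpl; ring.
  - eapply is_RInt_extR; [| | apply is_RInt_plusR; [apply (is_RInt_scalR (fun t => cos t ^ p) _ _ (a * c ^ p)), W_is | apply (IH (S p) c)]].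
    + intros t; simpl. rewrite Rpow_mult_distr. ring.
    + ring.
Qed.

Lemma L2 l : forall p, is_RInt (fun e => Aval l p (cos e) * (sin e * cos e)) 0 (PI / 2) (Bval l p).
Proof.
  induction l as [|a l IH]; intros p; simpl.
  - eapply is_RInt_extR; [| | apply is_RInt_zero]; intros; simpl; ring.
  - eapply is_RInt_extR; [| | apply is_RInt_plusR; [apply (is_RInt_scalR (fun e => cos e ^ (S p) * sin e) _ _ (a * W p)), M1 | apply (IH (S p))]].
    + intros t; simpl. ring.
    + unfold Rdiv; ring.
Qed.

Lemma L3 l : forall p, is_RInt (fun t => cos t ^ p * pe l (cos t) * sin t ^ 2) 0 (2 * PI) (Bval l p).
Proof.
  induction l as [|a l IH]; intros p; simpl.
  - eapply is_RInt_extR; [| | apply is_RInt_zero]; intros; simpl; ring.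
  - eapply is_RInt_extR; [| | apply is_RInt_plusR; [apply (is_RInt_scalR (fun t => cos t ^ p * sin t ^ 2) _ _ a), M2 | apply (IH (S p))]].
    + intros t; simpl. ring.
    + unfold Rdiv; ring.
Qed.

Lemma RInt_uniqR (f : R -> R) a b l : is_RInt f a b l -> RInt f a b = l.
Proof. apply (@is_RInt_unique R_CompleteNormedModule). Qed.

Lemma RInt_extR (f g : R -> R) a b : (forall x, f x = g x) -> RInt f a b = RInt g a b.
Proof. intros H; apply (@RInt_ext R_CompleteNormedModule); auto. Qed.

Lemma weyl l : haar_int (fun y => pe l (fst (su_a y))) =
  / PI * RInt (fun t => pe l (cos t) * sin t ^ 2) 0 (2 * PI).
Proof.
  unfold haar_int. cbn [hopf su_a fst].
  rewrite (RInt_extR _ (fun e => 2 * PI * (Aval l 0 (cos e) * (sin e * cos e)))).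
  - rewrite (RInt_uniqR _ _ _ (2 * PI * Bval l 0)) by (apply is_RInt_scalR, L2).
    rewrite (RInt_uniqR _ _ _ (Bval l 0)).
    + pose proof PI_RGT_0. field. lra.
    + eapply is_RInt_extR; [| | apply (L3 l 0)]; intros; simpl; ring.
  - intros e. rewrite (RInt_extR _ (fun t1 => (2 * PI) * (sin e * cos e) * ((cos e * cos t1) ^ 0 * pe l (cos e * cos t1)))).
    + rewrite (RInt_uniqR _ _ _ ((2 * PI) * (sin e * cos e) * Aval l 0 (cos e))) by (apply is_RInt_scalR, L1). ring.
    + intros t1. rewrite (RInt_uniqR _ _ _ ((2 * PI - 0) * (pe l (cos e * cos t1) * (sin e * cos e)))) by apply is_RInt_constR.
      simpl; ring.
Qed.

Lemma cosintZ (z : Z) : is_RInt (fun t => cos (IZR z * t)) 0 (2 * PI)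
  (if Z.eq_dec z 0 then 2 * PI else 0).
Proof.
  destruct (Z.eq_dec z 0) as [E|E].
  - subst z. eapply is_RInt_extR; [| | apply (is_RInt_constR 0 (2*PI) 1)].
    + intros; simpl. rewrite Rmult_0_l, cos_0; auto.
    + ring.
  - assert (Hz : IZR z <> 0) by (apply not_0_IZR; auto).
    eapply is_RInt_extR; [| | apply (is_RInt_deriveR (fun t => sin (IZR z * t) / IZR z) (fun t => cos (IZR z * t)))].
    + intros; simpl; auto.
    + rewrite Rmult_0_r, sin_0. rewrite (sin_eq_0_1 (IZR z * (2 * PI))). field; auto.
      exists (2 * z)%Z. rewrite mult_IZR. simpl. ring.
    + intros x. auto_derive; auto. fixeq. field. auto.
    + intros x. auto_derive; auto.
Qed.

Lemma prod_sum a b t : cos a * sin b * sin t =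
  / 4 * (cos (a - b + t) + cos (a + b - t) - cos (a - b - t) - cos (a + b + t)).
Proof.
  unfold Rminus. repeat rewrite ?cos_plus, ?sin_plus, ?cos_neg, ?sin_neg.
  field.
Qed.

Lemma term_int (N k : nat) : (1 <= k)%nat -> (k <= N)%nat ->
  is_RInt (fun t => cos (INR N * t) * sin (INR k * t) * sin t) 0 (2 * PI)
    (if Nat.eq_dec (k + 1) N then - (PI / 2) else 0).
Proof.
  intros Hk HkN.
  set (a := (Z.of_nat N - Z.of_nat k + 1)%Z).
  set (b := (Z.of_nat N + Z.of_nat k - 1)%Z).
  set (c := (Z.of_nat N - Z.of_nat k - 1)%Z).
  set (d := (Z.of_nat N + Z.of_nat k + 1)%Z).
  assert (I := is_RInt_scalR _ _ _ (/4) _ (is_RInt_minusR _ _ _ _ _ _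
     (is_RInt_minusR _ _ _ _ _ _ (is_RInt_plusR _ _ _ _ _ _ (cosintZ a) (cosintZ b)) (cosintZ c)) (cosintZ d))).
  eapply is_RInt_extR; [| | exact I].
  - assert (Ea : IZR a = INR N - INR k + 1) by (unfold a; rewrite plus_IZR, minus_IZR, <- !INR_IZR_INZ; ring).
    assert (Eb : IZR b = INR N + INR k - 1) by (unfold b; rewrite minus_IZR, plus_IZR, <- !INR_IZR_INZ; ring).
    assert (Ec : IZR c = INR N - INR k - 1) by (unfold c; rewrite !minus_IZR, <- !INR_IZR_INZ; ring).
    assert (Ed : IZR d = INR N + INR k + 1) by (unfold d; rewrite !plus_IZR, <- !INR_IZR_INZ; ring).
    intros y; cbv beta. rewrite Ea, Eb, Ec, Ed, prod_sum.
    replace ((INR N - INR k + 1) * y) with (INR N * y - INR k * y + y) by ring.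
    replace ((INR N + INR k - 1) * y) with (INR N * y + INR k * y - y) by ring.
    replace ((INR N - INR k - 1) * y) with (INR N * y - INR k * y - y) by ring.
    replace ((INR N + INR k + 1) * y) with (INR N * y + INR k * y + y) by ring.
    reflexivity.
  - destruct (Z.eq_dec a 0); [unfold a in *; lia|].
    destruct (Z.eq_dec b 0); [unfold b in *; lia|].
    destruct (Z.eq_dec d 0); [unfold d in *; lia|].
    destruct (Z.eq_dec c 0); destruct (Nat.eq_dec (k + 1) N); unfold c in *; try lia; field.
Qed.

Lemma is_RInt_sumR (f : nat -> R -> R) (v : nat -> R) a b M :
  (forall n, (n <= M)%nat -> is_RInt (f n) a b (v n)) ->
  is_RInt (fun t => sum_f_R0 (fun n => f n t) M) a b (sum_f_R0 v M).
Proof.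
  induction M; intros H; simpl.
  - apply H; auto.
  - apply is_RInt_plusR; auto.
Qed.

Definition bump (A : R) (N : nat) (x : SU2) (z : SU2) : R :=
  A * cos (INR N * acos (fst (su_a (su2_mul (su2_inv x) z)))).

Lemma sum_indic j c : sum_f_R0 (fun n => INR (n + 1) * (if Nat.eq_dec (n + 1 + 1) (j + 2) then c else 0)) (S j)
  = INR (j + 1) * c.
Proof.
  rewrite tech5; cbv beta. destruct (Nat.eq_dec (S j + 1 + 1) (j + 2)); [lia|].
  destruct j.
  - simpl sum_f_R0. destruct (Nat.eq_dec (0 + 1 + 1) (0 + 2)); [|lia]. simpl; ring.
  - rewrite tech5; cbv beta. destruct (Nat.eq_dec (S j + 1 + 1) (S j + 2)); [|lia].
    rewrite sum_eq_R0; [ring|]. intros m Hm. destruct (Nat.eq_dec (m + 1 + 1) (S j + 2)); [lia|]. ring.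
Qed.

Lemma bump_partial A N x : (2 <= N)%nat ->
  partial_sum (N - 1) (bump A N x) x = - A * INR (N - 1) / 2.
Proof.
  intros HN.
  set (Q := fun s => A * Tf N s * DP (N - 1) s).
  assert (HQ : IsPoly Q) by (apply poly_mult; [apply poly_scal, Tf_poly| apply DP_poly]).
  destruct HQ as [l Hl].
  unfold partial_sum.
  replace (fun y => bump A N x (su2_mul x (su2_inv y)) * dirichlet (N - 1) y) with
    (fun y => pe l (fst (su_a y))).
  2:{ apply functional_extensionality. intro y. rewrite <- Hl. unfold Q, bump.
      rewrite re_inv_mul, re_inv, dirichlet_DP. rewrite <- (Tf_cos N). rewrite cos_acos by apply re_bound.
      ring. }
  rewrite weyl.
  assert (E : forall t, pe l (cos t) * sin t ^ 2 = A * sum_f_R0 (fun n =>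
       INR (n + 1) * (cos (INR N * t) * sin (INR (n + 1) * t) * sin t)) (N - 1)).
  { intro t. rewrite <- Hl. unfold Q, DP. rewrite Tf_cos.
    generalize (N - 1)%nat. intro M. induction M.
    - cbn [sum_f_R0]. replace (INR (0 + 1) * t) with (INR (S 0) * t) by reflexivity.
      rewrite <- (Uf_sin 0). ring.
    - rewrite !tech5. cbv beta.
      replace (INR (S M + 1) * t) with (INR (S (S M)) * t) by (rewrite Nat.add_1_r; reflexivity).
      rewrite <- (Uf_sin (S M)).
      set (S1 := sum_f_R0 _ M) in *. set (S2 := sum_f_R0 _ M) in *.
      transitivity (A * cos (INR N * t) * S1 * sin t ^ 2 +
        A * (INR (S M + 1) * (cos (INR N * t) * (Uf (S M) (cos t) * sin t) * sin t))); [ring|].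
      rewrite IHM. ring. }
  rewrite (RInt_extR _ _ _ _ E).
  rewrite (RInt_uniqR _ _ _ (A * sum_f_R0 (fun n => INR (n + 1) * (if Nat.eq_dec (n + 1 + 1) N then - (PI / 2) else 0)) (N - 1))).
  - destruct N as [|[|j]]; [lia|lia|]. replace (S (S j) - 1)%nat with (S j) by lia.
    replace (S (S j)) with (j + 2)%nat by lia. rewrite sum_indic.
    rewrite Nat.add_1_r. pose proof PI_RGT_0. field. lra.
  - apply is_RInt_scalR. apply is_RInt_sumR. intros n Hn.
    apply (is_RInt_scalR (fun t => cos (INR N * t) * sin (INR (n + 1) * t) * sin t)).
    apply term_int; lia.
Qed.

Lemma exp_mono x y : x <= y -> exp x <= exp y.
Proof. intros H; destruct (Rle_lt_or_eq_dec _ _ H); [left; apply exp_increasing; auto| subst; lra]. Qed.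

Lemma ln_le0 x : 0 < x -> x <= 1 -> ln x <= 0.
Proof. intros H1 H2; destruct (Rle_lt_or_eq_dec _ _ H2); [left; rewrite <- ln_1; apply ln_increasing; auto| subst; rewrite ln_1; lra]. Qed.

Lemma ln_ge0 x : 1 <= x -> 0 <= ln x.
Proof. intros H; destruct (Rle_lt_or_eq_dec _ _ H); [left; rewrite <- ln_1; apply ln_increasing; lra| subst; rewrite ln_1; lra]. Qed.

Lemma Rpower_pos x y : 0 < Rpower x y.
Proof. unfold Rpower; apply exp_pos. Qed.

Lemma Rpower_ge1 x a : 1 <= x -> 0 <= a -> 1 <= Rpower x a.
Proof. intros H Ha; unfold Rpower; rewrite <- exp_0; apply exp_mono. pose proof (ln_ge0 x H); nra. Qed.

Lemma Rpower_small x a : 0 < x -> x <= 1 -> a <= 1 -> x <= Rpower x a.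
Proof.
  intros H1 H2 Ha. rewrite <- (Rpower_1 x) at 1 by auto. unfold Rpower. apply exp_mono.
  pose proof (ln_le0 x H1 H2). nra.
Qed.

Lemma cos_lip a b : Rabs (cos a - cos b) <= Rabs (a - b).
Proof.
  destruct (MVT_abs cos (fun c => - sin c) b a) as [c [Hc _]].
  - intros; apply derivable_pt_lim_cos.
  - rewrite Hc, Rabs_Ropp. pose proof (SIN_bound c). assert (Rabs (sin c) <= 1) by (apply Rabs_le; lra).
    pose proof (Rabs_pos (a - b)). nra.
Qed.

Lemma sin_lip a b : Rabs (sin a - sin b) <= Rabs (a - b).
Proof.
  destruct (MVT_abs sin cos b a) as [c [Hc _]].
  - intros; apply derivable_pt_lim_sin.
  - rewrite Hc. pose proof (COS_bound c). assert (Rabs (cos c) <= 1) by (apply Rabs_le; lra).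
    pose proof (Rabs_pos (a - b)). nra.
Qed.

Lemma sin_lower u : 0 <= u -> u <= PI / 2 -> u / 3 <= sin u.
Proof.
  intros H1 H2. pose proof PI_4. destruct (sin_bound u 0 H1 ltac:(lra)) as [Hs _].
  unfold sin_approx, sin_term in Hs. simpl in Hs.
  assert (u <= 2) by lra.
  assert (E : u / 3 <= u - u * u * u / 6) by nra.
  eapply Rle_trans; [exact E|]. eapply Rle_trans; [|exact Hs]. right. field.
Qed.

Lemma cs_ineq q1 q2 q3 r1 r2 r3 :
  (sqrt (q1^2+q2^2+q3^2) - sqrt (r1^2+r2^2+r3^2))^2 <= (q1-r1)^2 + (q2-r2)^2 + (q3-r3)^2.
Proof.
  set (A := q1^2+q2^2+q3^2). set (B := r1^2+r2^2+r3^2).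
  assert (HA : 0 <= A) by (unfold A; nra). assert (HB : 0 <= B) by (unfold B; nra).
  pose proof (sqrt_sqrt A HA). pose proof (sqrt_sqrt B HB).
  pose proof (sqrt_pos A). pose proof (sqrt_pos B).
  assert (CS : (q1*r1+q2*r2+q3*r3)^2 <= A * B).
  { assert (A*B - (q1*r1+q2*r2+q3*r3)^2 = (q1*r2-q2*r1)^2 + (q1*r3-q3*r1)^2 + (q2*r3-q3*r2)^2) by (unfold A,B; ring).
    pose proof (pow2_ge_0 (q1*r2-q2*r1)). pose proof (pow2_ge_0 (q1*r3-q3*r1)). pose proof (pow2_ge_0 (q2*r3-q3*r2)). lra. }
  assert (q1*r1+q2*r2+q3*r3 <= sqrt A * sqrt B).
  { destruct (Rle_or_lt (q1*r1+q2*r2+q3*r3) 0); [nra|].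
    apply Rsqr_incr_0_var; [|nra]. unfold Rsqr. rewrite <- (sqrt_sqrt (A*B)) in CS by nra.
    rewrite sqrt_mult in CS by auto. nra. }
  apply Rle_trans with (A + B - 2 * (q1*r1+q2*r2+q3*r3)).
  - replace ((sqrt A - sqrt B)^2) with (sqrt A * sqrt A + sqrt B * sqrt B - 2 * (sqrt A * sqrt B)) by ring. lra.
  - unfold A, B; right; ring.
Qed.

Lemma angle_lip (w w' : SU2) :
  Rabs (acos (fst (su_a w)) - acos (fst (su_a w'))) <= 3 * su2_dist w w'.
Proof.
  pose proof (re_bound w) as Hw. pose proof (re_bound w') as Hw'.
  pose proof (unit_comp w) as Uw. pose proof (unit_comp w') as Uw'.
  set (s := fst (su_a w)) in *. set (s' := fst (su_a w')) in *.
  set (t := acos s). set (t' := acos s').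
  assert (Ct : cos t = s) by (apply cos_acos; auto).
  assert (Ct' : cos t' = s') by (apply cos_acos; auto).
  assert (St : sin t = sqrt ((snd (su_a w))^2 + (fst (su_b w))^2 + (snd (su_b w))^2)).
  { unfold t; rewrite sin_acos by auto. f_equal. unfold Rsqr. lra. }
  assert (St' : sin t' = sqrt ((snd (su_a w'))^2 + (fst (su_b w'))^2 + (snd (su_b w'))^2)).
  { unfold t'; rewrite sin_acos by auto. f_equal. unfold Rsqr. lra. }
  assert (D2 : (cos t - cos t')^2 + (sin t - sin t')^2 <= su2_dist w w' ^ 2).
  { rewrite dist_sq, pow2_sqrt.
    - rewrite Ct, Ct', St, St'. pose proof (cs_ineq (snd (su_a w)) (fst (su_b w)) (snd (su_b w))
        (snd (su_a w')) (fst (su_b w')) (snd (su_b w'))). fold s s'. lra.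
    - pose proof (pow2_ge_0 (s - s')). pose proof (pow2_ge_0 (snd (su_a w) - snd (su_a w'))).
      pose proof (pow2_ge_0 (fst (su_b w) - fst (su_b w'))). pose proof (pow2_ge_0 (snd (su_b w) - snd (su_b w'))).
      fold s s'. lra. }
  assert (E : (cos t - cos t')^2 + (sin t - sin t')^2 = 4 * (sin (Rabs (t - t') / 2))^2).
  { replace ((cos t - cos t')^2 + (sin t - sin t')^2) with
      (2 - 2 * (cos t * cos t' + sin t * sin t')) by (pose proof (sin2_cos2 t); pose proof (sin2_cos2 t');
       unfold Rsqr in *; nra).
    rewrite <- cos_minus.
    assert (CA : cos (Rabs (t - t')) = cos (t - t')) by
      (destruct (Rcase_abs (t - t')); [rewrite Rabs_left, cos_neg | rewrite Rabs_right]; auto).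
    rewrite <- CA.
    replace (Rabs (t - t')) with (2 * (Rabs (t - t') / 2)) at 1 by field.
    rewrite cos_2a_sin. ring. }
  assert (Ht : 0 <= t <= PI) by apply acos_bound. assert (Ht' : 0 <= t' <= PI) by apply acos_bound.
  assert (Hu : 0 <= Rabs (t - t') / 2 <= PI / 2).
  { split; [pose proof (Rabs_pos (t - t')); lra|]. apply Rmult_le_compat_r; [lra|].
    apply Rabs_le; lra. }
  pose proof (sin_lower _ (proj1 Hu) (proj2 Hu)).
  pose proof (dist_ge0 w w').
  assert (Rabs (t - t') / 3 <= su2_dist w w').
  { apply Rsqr_incr_0_var; [|auto]. unfold Rsqr. pose proof (Rabs_pos (t - t')). nra. }
  lra.
Qed.

Lemma bump_bound A N x z : Rabs (bump A N x z) <= Rabs A.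
Proof.
  unfold bump. rewrite Rabs_mult. pose proof (COS_bound (INR N * acos (fst (su_a (su2_mul (su2_inv x) z))))).
  assert (Rabs (cos (INR N * acos (fst (su_a (su2_mul (su2_inv x) z))))) <= 1) by (apply Rabs_le; lra).
  pose proof (Rabs_pos A). nra.
Qed.

Lemma bump_lip A N x z z' : Rabs (bump A N x z - bump A N x z') <= Rabs A * INR N * (3 * su2_dist z z').
Proof.
  unfold bump. rewrite <- Rmult_minus_distr_l, Rabs_mult, Rmult_assoc.
  apply Rmult_le_compat_l; [apply Rabs_pos|].
  eapply Rle_trans; [apply cos_lip|]. rewrite <- Rmult_minus_distr_l, Rabs_mult, Rabs_right by (apply Rle_ge, pos_INR).
  apply Rmult_le_compat_l; [apply pos_INR|].
  rewrite <- (mul_iso (su2_inv x) z z'). apply angle_lip.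
Qed.

Lemma bump_diff2 A N x z z' : Rabs (bump A N x z - bump A N x z') <= 2 * Rabs A.
Proof.
  eapply Rle_trans; [apply Rabs_triang|]. rewrite Rabs_Ropp.
  pose proof (bump_bound A N x z); pose proof (bump_bound A N x z'); lra.
Qed.

Lemma bump_hol (alpha : R) A N x z z' : 0 < alpha < 1 -> (1 <= N)%nat ->
  Rabs (bump A N x z - bump A N x z') <= 3 * Rabs A * Rpower (INR N) alpha * hpow (su2_dist z z') alpha.
Proof.
  intros Ha HN. pose proof (bump_lip A N x z z') as L. pose proof (bump_diff2 A N x z z') as L2.
  pose proof (dist_ge0 z z') as Hd. pose proof (Rabs_pos A) as HA.
  assert (HNp : 1 <= INR N) by (apply (le_INR 1); auto).
  pose proof (Rpower_pos (INR N) alpha).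
  unfold hpow. destruct (Req_EM_T (su2_dist z z') 0) as [E|E].
  - rewrite E in L. rewrite Rmult_0_r. lra.
  - assert (Hdp : 0 < su2_dist z z') by lra.
    set (d := su2_dist z z') in *.
    pose proof (Rpower_pos d alpha).
    rewrite Rmult_assoc, (Rpower_mult_distr (INR N) d alpha) by lra.
    destruct (Rle_or_lt (INR N * d) 1) as [H1|H1].
    + pose proof (Rpower_small (INR N * d) alpha ltac:(nra) H1 ltac:(lra)). nra.
    + pose proof (Rpower_ge1 (INR N * d) alpha ltac:(lra) ltac:(lra)). nra.
Qed.

Definition UCd (G : SU2 -> R) := forall eps, 0 < eps -> exists del, 0 < del /\
  forall z z', su2_dist z z' < del -> Rabs (G z - G z') < eps.
Definition Bdd (G : SU2 -> R) := exists B, 0 <= B /\ forall z, Rabs (G z) <= B.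
Definition Hol (alpha : R) (g : SU2 -> R) := exists L, 0 <= L /\
  forall z z', Rabs (g z - g z') <= L * hpow (su2_dist z z') alpha.

Lemma cont_of_UC1 (f : R -> R) x : (forall eps, 0 < eps -> exists del, 0 < del /\
  forall y, Rabs (y - x) < del -> Rabs (f y - f x) < eps) -> continuity_pt f x.
Proof.
  intros H eps Heps. destruct (H eps Heps) as [d [Hd H']]. exists d; split; [lra|].
  intros y [_ Hy]. simpl in *. unfold R_dist in *. apply H'; auto.
Qed.

Lemma exRInt_of_cont (f : R -> R) a b : (forall x, continuity_pt f x) -> ex_RInt f a b.
Proof.
  intros H. apply (@ex_RInt_continuous R_CompleteNormedModule). intros z _.
  apply continuity_pt_filterlim. auto.
Qed.

Lemma hpow_le2 d alpha : 0 <= d -> d <= 2 -> 0 < alpha < 1 -> 0 <= hpow d alpha <= 2.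
Proof.
  intros H1 H2 Ha. unfold hpow. destruct (Req_EM_T d 0); [lra|].
  pose proof (Rpower_pos d alpha). split; [lra|].
  destruct (Rle_or_lt d 1) as [Hd1|Hd1].
  - unfold Rpower. pose proof (ln_le0 d ltac:(lra) Hd1).
    assert (E : exp (alpha * ln d) <= exp 0) by (apply exp_mono; nra). rewrite exp_0 in E. lra.
  - unfold Rpower. assert (E : exp (alpha * ln d) <= exp (1 * ln d)).
    { apply exp_mono. pose proof (ln_ge0 d ltac:(lra)). nra. }
    rewrite Rmult_1_l, exp_ln in E by lra. lra.
Qed.

Lemma Hol_Bdd alpha g : 0 < alpha < 1 -> Hol alpha g -> Bdd g.
Proof.
  intros Ha [L [HL H]]. set (z0 := hopf 0 0 0). exists (Rabs (g z0) + 2 * L). split.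
  - pose proof (Rabs_pos (g z0)); lra.
  - intros z. specialize (H z z0). pose proof (hpow_le2 (su2_dist z z0) alpha (dist_ge0 _ _) (dist_le2 _ _) Ha).
    replace (g z) with ((g z - g z0) + g z0) by ring. eapply Rle_trans; [apply Rabs_triang|]. nra.
Qed.

Lemma Hol_UCd alpha g : 0 < alpha < 1 -> Hol alpha g -> UCd g.
Proof.
  intros Ha [L [HL H]] eps Heps.
  set (c := eps / (L + 1)).
  assert (Hc : 0 < c) by (unfold c; apply Rdiv_lt_0_compat; lra).
  exists (Rpower c (/ alpha)). split; [apply Rpower_pos|].
  intros z z' Hd. specialize (H z z'). eapply Rle_lt_trans; [exact H|].
  unfold hpow. destruct (Req_EM_T (su2_dist z z') 0); [lra|].
  assert (Rpower (su2_dist z z') alpha < c).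
  { replace c with (Rpower (Rpower c (/ alpha)) alpha).
    - unfold Rpower at 1 3. apply exp_increasing. apply Rmult_lt_compat_l; [lra|].
      apply ln_increasing; auto. pose proof (dist_ge0 z z'); lra.
    - rewrite Rpower_mult, Rinv_l, Rpower_1 by lra; auto. }
  assert (L * c < eps).
  { unfold c. apply (Rmult_lt_reg_r (L + 1)); [lra|]. unfold Rdiv.
    rewrite Rmult_assoc, (Rmult_assoc eps), Rinv_l by lra. nra. }
  pose proof (Rpower_pos (su2_dist z z') alpha). nra.
Qed.

Lemma UCd_mulinv g x : UCd g -> UCd (fun y => g (su2_mul x (su2_inv y))).
Proof.
  intros H eps Heps. destruct (H eps Heps) as [d [Hd H']]. exists d; split; auto.
  intros z z' Hz. apply H'. rewrite mul_iso, inv_iso; auto.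
Qed.

Lemma Bdd_mulinv g x : Bdd g -> Bdd (fun y => g (su2_mul x (su2_inv y))).
Proof. intros [B [HB H]]; exists B; split; auto. Qed.

Lemma UCd_dir N : UCd (dirichlet N).
Proof.
  destruct (poly_lip _ (DP_poly N)) as [K [B [HK [HB H]]]].
  intros eps Heps. exists (eps / (K + 1)). split; [apply Rdiv_lt_0_compat; lra|].
  intros z z' Hz. rewrite !dirichlet_DP.
  destruct (H _ _ (re_bound z) (re_bound z')) as [H1 _].
  pose proof (re_lip z z'). eapply Rle_lt_trans; [exact H1|].
  assert (Rabs (fst (su_a z) - fst (su_a z')) < eps / (K + 1)) by lra.
  apply (Rlt_le_trans _ ((K + 1) * (eps / (K + 1)))).
  - pose proof (Rabs_pos (fst (su_a z) - fst (su_a z'))).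
    assert (0 < eps / (K + 1)) by (apply Rdiv_lt_0_compat; lra). nra.
  - right; field; lra.
Qed.

Lemma Bdd_dir N : Bdd (dirichlet N).
Proof. exists (BN N); split; [apply BN_ge0| apply dirichlet_bound]. Qed.

Lemma UCd_mult f g : UCd f -> UCd g -> Bdd f -> Bdd g -> UCd (fun z => f z * g z).
Proof.
  intros Hf Hg [Bf [HBf Bf']] [Bg [HBg Bg']] eps Heps.
  destruct (Hf (eps / (2 * (Bg + 1)))) as [d1 [Hd1 H1]]; [apply Rdiv_lt_0_compat; lra|].
  destruct (Hg (eps / (2 * (Bf + 1)))) as [d2 [Hd2 H2]]; [apply Rdiv_lt_0_compat; lra|].
  exists (Rmin d1 d2). split; [apply Rmin_pos; auto|].
  intros z z' Hz. pose proof (Rmin_l d1 d2). pose proof (Rmin_r d1 d2).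
  specialize (H1 z z' ltac:(lra)). specialize (H2 z z' ltac:(lra)).
  replace (f z * g z - f z' * g z') with ((f z - f z') * g z + f z' * (g z - g z')) by ring.
  eapply Rle_lt_trans; [apply Rabs_triang|]. rewrite !Rabs_mult.
  pose proof (Bg' z). pose proof (Bf' z'). pose proof (Rabs_pos (f z - f z')). pose proof (Rabs_pos (g z - g z')).
  pose proof (Rabs_pos (g z)). pose proof (Rabs_pos (f z')).
  assert (E1 : (eps / (2 * (Bg + 1))) * Bg <= eps / 2).
  { unfold Rdiv. rewrite Rinv_mult. apply (Rmult_le_reg_r (Bg + 1)); [lra|].
    replace (eps * (/ 2 * / (Bg + 1)) * Bg * (Bg + 1)) with (eps / 2 * Bg) by (field; lra). nra. }
  assert (E2 : Bf * (eps / (2 * (Bf + 1))) <= eps / 2).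
  { unfold Rdiv. rewrite Rinv_mult. apply (Rmult_le_reg_r (Bf + 1)); [lra|].
    replace (Bf * (eps * (/ 2 * / (Bf + 1))) * (Bf + 1)) with (eps / 2 * Bf) by (field; lra). nra. }
  assert (Rabs (f z - f z') * Rabs (g z) <= eps / (2 * (Bg + 1)) * Bg) by nra.
  assert (Rabs (f z') * Rabs (g z - g z') <= Bf * (eps / (2 * (Bf + 1)))) by nra.
  assert (Rabs (f z - f z') * Rabs (g z) < eps / 2 \/ Rabs (f z') * Rabs (g z - g z') < eps / 2).
  { destruct (Req_dec Bg 0).
    - left. subst Bg. assert (Rabs (g z) = 0) by lra. rewrite H11. lra.
    - destruct (Rle_or_lt Bg 0); [lra|].
      left. apply (Rle_lt_trans _ (eps / (2 * (Bg + 1)) * Bg)); auto.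
      apply (Rmult_lt_reg_r (Bg + 1)); [lra|].
      replace (eps / (2 * (Bg + 1)) * Bg * (Bg + 1)) with (eps / 2 * Bg) by (field; lra). nra. }
  lra.
Qed.

Lemma Bdd_mult f g : Bdd f -> Bdd g -> Bdd (fun z => f z * g z).
Proof.
  intros [Bf [HBf Bf']] [Bg [HBg Bg']]. exists (Bf * Bg). split; [nra|].
  intros z. rewrite Rabs_mult. pose proof (Bf' z); pose proof (Bg' z).
  pose proof (Rabs_pos (f z)); pose proof (Rabs_pos (g z)). nra.
Qed.

Lemma hopf_dist e t1 t2 e' t1' t2' :
  su2_dist (hopf e t1 t2) (hopf e' t1' t2') <= 2 * (Rabs (e - e') + Rabs (t1 - t1') + Rabs (t2 - t2')).
Proof.
  rewrite dist_sq. cbn [hopf su_a su_b fst snd].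
  set (S := Rabs (e - e') + Rabs (t1 - t1') + Rabs (t2 - t2')).
  pose proof (Rabs_pos (e - e')). pose proof (Rabs_pos (t1 - t1')). pose proof (Rabs_pos (t2 - t2')).
  assert (HS : 0 <= S) by (unfold S; lra).
  assert (B : forall (f g : R -> R) a a' b b',
    (forall x, Rabs (f x) <= 1) -> (forall x, Rabs (g x) <= 1) ->
    (forall x y, Rabs (f x - f y) <= Rabs (x - y)) -> (forall x y, Rabs (g x - g y) <= Rabs (x - y)) ->
    Rabs (a - a') + Rabs (b - b') <= S ->
    (f a * g b - f a' * g b') ^ 2 <= S ^ 2).
  { intros f g a a' b b' Bf Bg Lf Lg HabS.
    replace (f a * g b - f a' * g b') with (f a * (g b - g b') + g b' * (f a - f a')) by ring.
    assert (Rabs (f a * (g b - g b') + g b' * (f a - f a')) <= S).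
    { eapply Rle_trans; [apply Rabs_triang|]. rewrite !Rabs_mult.
      pose proof (Bf a); pose proof (Bg b'); pose proof (Lf a a'); pose proof (Lg b b').
      pose proof (Rabs_pos (f a)); pose proof (Rabs_pos (g b')); pose proof (Rabs_pos (g b - g b'));
      pose proof (Rabs_pos (f a - f a')). nra. }
    rewrite <- Rsqr_pow2, <- (Rsqr_pow2 S). rewrite Rsqr_abs. apply Rsqr_incr_1; auto; apply Rabs_pos. }
  assert (Bc : forall x, Rabs (cos x) <= 1) by (intro x; pose proof (COS_bound x); apply Rabs_le; lra).
  assert (Bs : forall x, Rabs (sin x) <= 1) by (intro x; pose proof (SIN_bound x); apply Rabs_le; lra).
  pose proof (B cos cos e e' t1 t1' Bc Bc cos_lip cos_lip ltac:(unfold S; lra)).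
  pose proof (B cos sin e e' t1 t1' Bc Bs cos_lip sin_lip ltac:(unfold S; lra)).
  pose proof (B sin cos e e' t2 t2' Bs Bc sin_lip cos_lip ltac:(unfold S; lra)).
  pose proof (B sin sin e e' t2 t2' Bs Bs sin_lip sin_lip ltac:(unfold S; lra)).
  rewrite <- (sqrt_square (2 * S)) by lra. apply sqrt_le_1_alt. nra.
Qed.

Definition UC3 (F : R -> R -> R -> R) := forall eps, 0 < eps -> exists del, 0 < del /\
  forall e e' t1 t1' t2 t2', Rabs (e - e') < del -> Rabs (t1 - t1') < del -> Rabs (t2 - t2') < del ->
  Rabs (F e t1 t2 - F e' t1' t2') < eps.

Definition Phi (G : SU2 -> R) e t1 t2 := G (hopf e t1 t2) * (sin e * cos e).

Lemma sc_lip e e' : Rabs (sin e * cos e - sin e' * cos e') <= 2 * Rabs (e - e').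
Proof.
  replace (sin e * cos e - sin e' * cos e') with (sin e * (cos e - cos e') + cos e' * (sin e - sin e')) by ring.
  eapply Rle_trans; [apply Rabs_triang|]. rewrite !Rabs_mult.
  assert (Rabs (cos e') <= 1) by (pose proof (COS_bound e'); apply Rabs_le; lra).
  assert (Rabs (sin e) <= 1) by (pose proof (SIN_bound e); apply Rabs_le; lra).
  pose proof (cos_lip e e'); pose proof (sin_lip e e').
  pose proof (Rabs_pos (sin e)); pose proof (Rabs_pos (cos e')); pose proof (Rabs_pos (cos e - cos e'));
  pose proof (Rabs_pos (sin e - sin e')). nra.
Qed.

Lemma sc_bound e : Rabs (sin e * cos e) <= 1.
Proof.
  rewrite Rabs_mult. assert (Rabs (cos e) <= 1) by (pose proof (COS_bound e); apply Rabs_le; lra).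
  assert (Rabs (sin e) <= 1) by (pose proof (SIN_bound e); apply Rabs_le; lra).
  pose proof (Rabs_pos (sin e)); pose proof (Rabs_pos (cos e)). nra.
Qed.

Lemma UC3_Phi G : UCd G -> Bdd G -> UC3 (Phi G).
Proof.
  intros HU [B [HB HB']] eps Heps.
  destruct (HU (eps / 2)) as [d1 [Hd1 H1]]; [lra|].
  set (d2 := eps / (4 * (B + 1))).
  assert (Hd2 : 0 < d2) by (unfold d2; apply Rdiv_lt_0_compat; lra).
  exists (Rmin (d1 / 7) d2). split; [apply Rmin_pos; lra|].
  intros e e' t1 t1' t2 t2' He Ht1 Ht2.
  pose proof (Rmin_l (d1 / 7) d2). pose proof (Rmin_r (d1 / 7) d2).
  pose proof (hopf_dist e t1 t2 e' t1' t2').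
  assert (Hg : Rabs (G (hopf e t1 t2) - G (hopf e' t1' t2')) < eps / 2) by (apply H1; lra).
  unfold Phi.
  replace (G (hopf e t1 t2) * (sin e * cos e) - G (hopf e' t1' t2') * (sin e' * cos e')) with
    ((G (hopf e t1 t2) - G (hopf e' t1' t2')) * (sin e * cos e) + G (hopf e' t1' t2') * (sin e * cos e - sin e' * cos e')) by ring.
  eapply Rle_lt_trans; [apply Rabs_triang|]. rewrite Rabs_mult, (Rabs_mult (G (hopf e' t1' t2'))).
  pose proof (sc_bound e). pose proof (sc_lip e e'). pose proof (HB' (hopf e' t1' t2')).
  pose proof (Rabs_pos (G (hopf e t1 t2) - G (hopf e' t1' t2'))). pose proof (Rabs_pos (sin e * cos e)).
  pose proof (Rabs_pos (G (hopf e' t1' t2'))). pose proof (Rabs_pos (sin e * cos e - sin e' * cos e')).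
  assert (B * (2 * d2) <= eps / 2).
  { unfold d2. apply (Rmult_le_reg_r (B + 1)); [lra|].
    replace (B * (2 * (eps / (4 * (B + 1)))) * (B + 1)) with (eps / 2 * B) by (field; lra). nra. }
  assert (T1 : Rabs (G (hopf e t1 t2) - G (hopf e' t1' t2')) * Rabs (sin e * cos e) < eps / 2) by nra.
  assert (Rabs (sin e * cos e - sin e' * cos e') <= 2 * d2) by lra.
  assert (T2 : Rabs (G (hopf e' t1' t2')) * Rabs (sin e * cos e - sin e' * cos e') <= B * (2 * d2)) by nra.
  lra.
Qed.

Definition I2 (F : R -> R -> R -> R) e t1 := RInt (fun t2 => F e t1 t2) 0 (2 * PI).
Definition I1 (F : R -> R -> R -> R) e := RInt (fun t1 => I2 F e t1) 0 (2 * PI).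

Lemma RInt_minusR (f g : R -> R) a b : ex_RInt f a b -> ex_RInt g a b ->
  RInt (fun x => f x - g x) a b = RInt f a b - RInt g a b.
Proof. intros; apply (@RInt_minus R_CompleteNormedModule); auto. Qed.
Lemma RInt_plusR (f g : R -> R) a b : ex_RInt f a b -> ex_RInt g a b ->
  RInt (fun x => f x + g x) a b = RInt f a b + RInt g a b.
Proof. intros; apply (@RInt_plus R_CompleteNormedModule); auto. Qed.
Lemma ex_RInt_minusR (f g : R -> R) a b : ex_RInt f a b -> ex_RInt g a b ->
  ex_RInt (fun x => f x - g x) a b.
Proof. intros; apply (@ex_RInt_minus R_NormedModule); auto. Qed.

Lemma RInt_close (f g : R -> R) a b eps : a <= b -> ex_RInt f a b -> ex_RInt g a b ->
  (forall x, Rabs (f x - g x) < eps) -> Rabs (RInt f a b - RInt g a b) <= (b - a) * eps.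
Proof.
  intros Hab Hf Hg H. rewrite <- RInt_minusR by auto.
  apply abs_RInt_le_const; auto. apply ex_RInt_minusR; auto. intros; left; auto.
Qed.

Lemma twoPI_pos : 0 < 2 * PI.
Proof. pose proof PI_RGT_0; lra. Qed.

Lemma UC3_ex2 F : UC3 F -> forall e t1, ex_RInt (fun t2 => F e t1 t2) 0 (2 * PI).
Proof.
  intros H e t1. apply exRInt_of_cont. intro x. apply cont_of_UC1. intros eps Heps.
  destruct (H eps Heps) as [d [Hd H']]. exists d; split; auto. intros y Hy.
  apply H'; auto; rewrite Rminus_eq_0, Rabs_R0; auto.
Qed.

Lemma UC3_I2 F : UC3 F -> forall eps, 0 < eps -> exists del, 0 < del /\
  forall e e' t1 t1', Rabs (e - e') < del -> Rabs (t1 - t1') < del -> Rabs (I2 F e t1 - I2 F e' t1') < eps.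
Proof.
  intros H eps Heps. pose proof twoPI_pos.
  destruct (H (eps / (2 * (2 * PI)))) as [d [Hd H']]; [apply Rdiv_lt_0_compat; lra|].
  exists d; split; auto. intros e e' t1 t1' He Ht. unfold I2.
  eapply Rle_lt_trans; [apply RInt_close; [lra| apply UC3_ex2; auto| apply UC3_ex2; auto|]|].
  - intros x. apply H'; auto. rewrite Rminus_eq_0, Rabs_R0; auto.
  - replace ((2 * PI - 0) * (eps / (2 * (2 * PI)))) with (eps / 2) by (field; lra). lra.
Qed.

Lemma UC3_ex1 F : UC3 F -> forall e, ex_RInt (fun t1 => I2 F e t1) 0 (2 * PI).
Proof.
  intros H e. apply exRInt_of_cont. intro x. apply cont_of_UC1. intros eps Heps.
  destruct (UC3_I2 F H eps Heps) as [d [Hd H']]. exists d; split; auto. intros y Hy.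
  apply H'; auto; rewrite Rminus_eq_0, Rabs_R0; auto.
Qed.

Lemma UC3_ex0 F : UC3 F -> ex_RInt (fun e => I1 F e) 0 (PI / 2).
Proof.
  intros H. pose proof twoPI_pos. apply exRInt_of_cont. intro x. apply cont_of_UC1. intros eps Heps.
  destruct (UC3_I2 F H (eps / (2 * (2 * PI)))) as [d [Hd H']]; [apply Rdiv_lt_0_compat; lra|].
  exists d; split; auto. intros y Hy. unfold I1.
  eapply Rle_lt_trans; [apply RInt_close; [lra| apply UC3_ex1; auto| apply UC3_ex1; auto|]|].
  - intros t. apply H'; auto. rewrite Rminus_eq_0, Rabs_R0; auto.
  - replace ((2 * PI - 0) * (eps / (2 * (2 * PI)))) with (eps / 2) by (field; lra). lra.
Qed.

Lemma haar_I (G : SU2 -> R) : haar_int G = / (2 * PI ^ 2) * RInt (fun e => I1 (Phi G) e) 0 (PI / 2).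
Proof. reflexivity. Qed.

Lemma haar_plus G1 G2 : UCd G1 -> Bdd G1 -> UCd G2 -> Bdd G2 ->
  haar_int (fun y => G1 y + G2 y) = haar_int G1 + haar_int G2.
Proof.
  intros U1 B1 U2 B2. pose proof (UC3_Phi G1 U1 B1) as P1. pose proof (UC3_Phi G2 U2 B2) as P2.
  rewrite !haar_I.
  rewrite (RInt_extR _ (fun e => I1 (Phi G1) e + I1 (Phi G2) e)).
  - rewrite RInt_plusR by (apply UC3_ex0; auto). rewrite Rmult_plus_distr_l; reflexivity.
  - intros e. unfold I1. rewrite <- RInt_plusR by (apply UC3_ex1; auto).
    apply RInt_extR. intros t1. unfold I2. rewrite <- RInt_plusR by (apply UC3_ex2; auto).
    apply RInt_extR. intros t2. unfold Phi. ring.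
Qed.

Lemma haar_bound G s : UCd G -> Bdd G -> (forall y, Rabs (G y) <= s) -> Rabs (haar_int G) <= PI * s.
Proof.
  intros U B Hs. pose proof (UC3_Phi G U B) as P. rewrite haar_I. pose proof PI_RGT_0.
  assert (Hs0 : 0 <= s) by (pose proof (Hs (hopf 0 0 0)); pose proof (Rabs_pos (G (hopf 0 0 0))); lra).
  assert (A2 : forall e t1, Rabs (I2 (Phi G) e t1) <= 2 * PI * s).
  { intros e t1. unfold I2. eapply Rle_trans; [apply abs_RInt_le_const; [lra| apply UC3_ex2; auto|]|].
    - intros t _. unfold Phi. rewrite Rabs_mult. pose proof (sc_bound e). pose proof (Hs (hopf e t1 t)).
      pose proof (Rabs_pos (G (hopf e t1 t))). pose proof (Rabs_pos (sin e * cos e)). instantiate (1 := s). nra.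
    - lra. }
  assert (A1 : forall e, Rabs (I1 (Phi G) e) <= 2 * PI * (2 * PI * s)).
  { intros e. unfold I1. eapply Rle_trans; [apply abs_RInt_le_const; [lra| apply UC3_ex1; auto|]|].
    - intros t _. apply A2.
    - lra. }
  rewrite Rabs_mult, Rabs_right by (apply Rle_ge, Rlt_le, Rinv_0_lt_compat; nra).
  assert (Rabs (RInt (fun e => I1 (Phi G) e) 0 (PI / 2)) <= (PI / 2 - 0) * (2 * PI * (2 * PI * s))).
  { apply abs_RInt_le_const; [lra| apply UC3_ex0; auto|]. intros; apply A1. }
  apply (Rmult_le_reg_l (2 * PI ^ 2)); [nra|].
  rewrite <- Rmult_assoc, Rinv_r, Rmult_1_l by nra.
  eapply Rle_trans; [exact H0|]. right. field.
Qed.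

Lemma hpow_ge0 d alpha : 0 <= hpow d alpha.
Proof. unfold hpow; destruct (Req_EM_T d 0); [lra| left; apply Rpower_pos]. Qed.

Lemma Hol_plus alpha f g : Hol alpha f -> Hol alpha g -> Hol alpha (fun z => f z + g z).
Proof.
  intros [L1 [H1 F1]] [L2 [H2 F2]]. exists (L1 + L2); split; [lra|]. intros z z'.
  replace (f z + g z - (f z' + g z')) with ((f z - f z') + (g z - g z')) by ring.
  eapply Rle_trans; [apply Rabs_triang|]. pose proof (F1 z z'); pose proof (F2 z z'). lra.
Qed.

Lemma Hol_minus alpha f g : Hol alpha f -> Hol alpha g -> Hol alpha (fun z => f z - g z).
Proof.
  intros [L1 [H1 F1]] [L2 [H2 F2]]. exists (L1 + L2); split; [lra|]. intros z z'.
  replace (f z - g z - (f z' - g z')) with ((f z - f z') - (g z - g z')) by ring.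
  eapply Rle_trans; [apply Rabs_triang|]. rewrite Rabs_Ropp. pose proof (F1 z z'); pose proof (F2 z z'). lra.
Qed.

Lemma Hol_const alpha c : Hol alpha (fun _ => c).
Proof. exists 0; split; [lra|]. intros. rewrite Rminus_eq_0, Rabs_R0. lra. Qed.

Lemma Hol_bump alpha A N x : 0 < alpha < 1 -> (1 <= N)%nat -> Hol alpha (bump A N x).
Proof.
  intros Ha HN. exists (3 * Rabs A * Rpower (INR N) alpha). split.
  - pose proof (Rabs_pos A). pose proof (Rpower_pos (INR N) alpha). nra.
  - intros; apply bump_hol; auto.
Qed.

Section PS.
Variable alpha : R.
Hypothesis Ha : 0 < alpha < 1.

Lemma ps_UCB g N x : Hol alpha g ->
  UCd (fun y => g (su2_mul x (su2_inv y)) * dirichlet N y) /\ Bdd (fun y => g (su2_mul x (su2_inv y)) * dirichlet N y).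
Proof.
  intros H. pose proof (Hol_UCd alpha g Ha H). pose proof (Hol_Bdd alpha g Ha H).
  split.
  - apply UCd_mult; [apply UCd_mulinv; auto| apply UCd_dir| apply Bdd_mulinv; auto| apply Bdd_dir].
  - apply Bdd_mult; [apply Bdd_mulinv; auto| apply Bdd_dir].
Qed.

Lemma ps_plus g1 g2 N x : Hol alpha g1 -> Hol alpha g2 ->
  partial_sum N (fun z => g1 z + g2 z) x = partial_sum N g1 x + partial_sum N g2 x.
Proof.
  intros H1 H2. destruct (ps_UCB g1 N x H1) as [U1 B1]. destruct (ps_UCB g2 N x H2) as [U2 B2].
  unfold partial_sum. rewrite <- haar_plus by auto. f_equal. apply functional_extensionality; intro y. ring.
Qed.

Lemma ps_bound g N x s : Hol alpha g -> (forall z, Rabs (g z) <= s) ->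
  Rabs (partial_sum N g x) <= PI * (s * BN N).
Proof.
  intros H Hs. destruct (ps_UCB g N x H) as [U B]. unfold partial_sum. apply haar_bound; auto.
  intros y. rewrite Rabs_mult. pose proof (Hs (su2_mul x (su2_inv y))). pose proof (dirichlet_bound N y).
  pose proof (Rabs_pos (g (su2_mul x (su2_inv y)))). pose proof (Rabs_pos (dirichlet N y)). nra.
Qed.

End PS.

Lemma existsN alpha K : 0 < alpha < 1 -> 0 <= K -> exists N : nat, (2 <= N)%nat /\
  K <= INR (N - 1) * Rpower (INR N) (- alpha) /\ K * Rpower (INR N) (- alpha) <= 1.
Proof.
  intros Ha HK.
  set (a := Rpower (2 * K + 2) (/ (1 - alpha))). set (b := Rpower (K + 1) (/ alpha)).
  pose proof (Rpower_pos (2 * K + 2) (/ (1 - alpha))) as Ha0. pose proof (Rpower_pos (K + 1) (/ alpha)) as Hb0.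
  fold a in Ha0. fold b in Hb0.
  destruct (INR_unbounded (a + b + 2)) as [N HN]. exists N.
  assert (H2 : (2 < N)%nat) by (apply INR_lt; simpl; lra).
  set (X := INR N) in *.
  split; [lia|].
  assert (P1 : 2 * K + 2 <= Rpower X (1 - alpha)).
  { replace (2 * K + 2) with (Rpower a (1 - alpha)).
    - apply Rle_Rpower_l; lra.
    - unfold a. rewrite Rpower_mult, Rinv_l, Rpower_1 by lra; auto. }
  assert (P2 : K + 1 <= Rpower X alpha).
  { replace (K + 1) with (Rpower b alpha).
    - apply Rle_Rpower_l; lra.
    - unfold b. rewrite Rpower_mult, Rinv_l, Rpower_1 by lra; auto. }
  assert (HX : 0 < X) by lra.
  assert (E1 : X * Rpower X (- alpha) = Rpower X (1 - alpha)).
  { rewrite <- (Rpower_1 X) at 1 by auto. rewrite <- Rpower_plus. f_equal; ring. }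
  assert (E2 : INR (N - 1) = X - 1) by (rewrite minus_INR by lia; simpl; auto).
  pose proof (Rpower_pos X (- alpha)). pose proof (Rpower_pos X alpha).
  split.
  - rewrite E2. assert (X - 1 >= X / 2) by lra. nra.
  - rewrite Rpower_Ropp. apply (Rmult_le_reg_r (Rpower X alpha)); auto.
    rewrite Rmult_assoc, Rinv_l by lra. lra.
Qed.

Section Construction.
Variable alpha : R.
Hypothesis Ha : 0 < alpha < 1.
Variable xs : nat -> SU2.

Definition chooseN (K : R) : nat :=
  match Rle_dec 0 K with
  | left HK => proj1_sig (constructive_indefinite_description _ (existsN alpha K Ha HK))
  | right _ => 2%nat
  end.

Lemma chooseN_spec K : 0 <= K -> (2 <= chooseN K)%nat /\
  K <= INR (chooseN K - 1) * Rpower (INR (chooseN K)) (- alpha) /\ K * Rpower (INR (chooseN K)) (- alpha) <= 1.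
Proof.
  intros HK. unfold chooseN. destruct (Rle_dec 0 K); [|lra].
  destruct (constructive_indefinite_description _ _) as [N HN]; simpl; auto.
Qed.

Definition sched (l : nat) : nat := fst (Cantor.of_nat l).

Definition amp (k N : nat) : R := (/ 2) ^ k * Rpower (INR N) (- alpha).

Definition Nl (k : nat) (B : R) : nat := chooseN (Rmax (2 ^ (S k) * INR (S k)) B).

Fixpoint state (k : nat) : (SU2 -> R) * R :=
  match k with
  | O => (fun _ => 0, 1)
  | S k' =>
    let p := state k' in
    let N := Nl k' (snd p) in
    let x := xs (sched k') in
    let w := partial_sum (N - 1) (bump (amp k' N) N x) x in
    let v := partial_sum (N - 1) (fst p) x in
    let e := if Rle_dec (Rabs w) (Rabs (v + w)) then 1 else -1 in
    (fun z => fst p z + bump (e * amp k' N) N x z, Rmax (snd p) (PI * BN (N - 1) + 1))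
  end.

Definition Fs k := fst (state k).
Definition Bs k := snd (state k).
Definition Nk k := Nl k (Bs k).
Definition wk k := partial_sum (Nk k - 1) (bump (amp k (Nk k)) (Nk k) (xs (sched k))) (xs (sched k)).
Definition vk k := partial_sum (Nk k - 1) (Fs k) (xs (sched k)).
Definition ek k := if Rle_dec (Rabs (wk k)) (Rabs (vk k + wk k)) then 1 else -1.
Definition u k := bump (ek k * amp k (Nk k)) (Nk k) (xs (sched k)).

Lemma Fs_S k z : Fs (S k) z = Fs k z + u k z.
Proof. reflexivity. Qed.
Lemma Bs_S k : Bs (S k) = Rmax (Bs k) (PI * BN (Nk k - 1) + 1).
Proof. reflexivity. Qed.

Lemma Bs_ge1 k : 1 <= Bs k.
Proof.
  induction k; [unfold Bs; simpl; lra|]. rewrite Bs_S. eapply Rle_trans; [exact IHk| apply Rmax_l].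
Qed.

Lemma Bs_mono k m : (k <= m)%nat -> Bs k <= Bs m.
Proof.
  induction 1; [lra|]. rewrite Bs_S. eapply Rle_trans; [exact IHle| apply Rmax_l].
Qed.

Lemma Bs_after k m : (k < m)%nat -> PI * BN (Nk k - 1) + 1 <= Bs m.
Proof.
  intros H. eapply Rle_trans; [| apply (Bs_mono (S k)); lia]. rewrite Bs_S. apply Rmax_r.
Qed.

Lemma Nk_spec k : (2 <= Nk k)%nat /\
  2 ^ (S k) * INR (S k) <= INR (Nk k - 1) * Rpower (INR (Nk k)) (- alpha) /\
  Bs k * Rpower (INR (Nk k)) (- alpha) <= 1.
Proof.
  unfold Nk, Nl. set (K := Rmax (2 ^ (S k) * INR (S k)) (Bs k)).
  assert (HK : 0 <= K) by (unfold K; pose proof (Bs_ge1 k); eapply Rle_trans; [|apply Rmax_r]; lra).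
  destruct (chooseN_spec K HK) as [H1 [H2 H3]]. split; auto.
  pose proof (Rpower_pos (INR (chooseN K)) (- alpha)).
  split.
  - eapply Rle_trans; [apply Rmax_l| exact H2].
  - eapply Rle_trans; [| exact H3]. apply Rmult_le_compat_r; [lra| apply Rmax_r].
Qed.

Lemma amp_pos k N : 0 < amp k N.
Proof. unfold amp. apply Rmult_lt_0_compat; [apply pow_lt; lra| apply Rpower_pos]. Qed.

Lemma ek_abs k : Rabs (ek k) = 1.
Proof. unfold ek; destruct (Rle_dec _ _); unfold Rabs; destruct (Rcase_abs _); lra. Qed.

Lemma u_bound k z : Rabs (u k z) <= (/ 2) ^ k / Bs k.
Proof.
  unfold u. eapply Rle_trans; [apply bump_bound|]. rewrite Rabs_mult, ek_abs, Rmult_1_l.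
  rewrite Rabs_right by (apply Rle_ge, Rlt_le, amp_pos). unfold amp.
  destruct (Nk_spec k) as [_ [_ H]]. pose proof (Bs_ge1 k).
  pose proof (pow_lt (/2) k ltac:(lra)). pose proof (Rpower_pos (INR (Nk k)) (- alpha)).
  unfold Rdiv. apply Rmult_le_compat_l; [lra|].
  apply (Rmult_le_reg_l (Bs k)); [lra|]. rewrite Rinv_r by lra. lra.
Qed.

Lemma u_bound' k z : Rabs (u k z) <= (/ 2) ^ k.
Proof.
  eapply Rle_trans; [apply u_bound|]. pose proof (Bs_ge1 k). pose proof (pow_lt (/2) k ltac:(lra)).
  unfold Rdiv. rewrite <- (Rmult_1_r ((/2)^k)) at 2. apply Rmult_le_compat_l; [lra|].
  rewrite <- Rinv_1. apply Rinv_le_contravar; lra.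
Qed.

Lemma u_hol k z z' : Rabs (u k z - u k z') <= 3 * (/ 2) ^ k * hpow (su2_dist z z') alpha.
Proof.
  unfold u. destruct (Nk_spec k) as [HN _].
  eapply Rle_trans; [apply bump_hol; [exact Ha| lia]|].
  rewrite Rabs_mult, ek_abs, Rmult_1_l, Rabs_right by (apply Rle_ge, Rlt_le, amp_pos).
  unfold amp.
  assert (E : Rpower (INR (Nk k)) (- alpha) * Rpower (INR (Nk k)) alpha = 1).
  { rewrite <- Rpower_plus. replace (- alpha + alpha) with 0 by ring. apply Rpower_O. apply (lt_INR 0); lia. }
  right. transitivity (3 * (/ 2) ^ k * (Rpower (INR (Nk k)) (- alpha) * Rpower (INR (Nk k)) alpha) *
    hpow (su2_dist z z') alpha); [ring| rewrite E; ring].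
Qed.

Lemma Hol_u k : Hol alpha (u k).
Proof.
  exists (3 * (/2) ^ k). split; [pose proof (pow_lt (/2) k ltac:(lra)); lra|]. apply u_hol.
Qed.

Lemma Hol_Fs k : Hol alpha (Fs k).
Proof.
  induction k.
  - unfold Fs; simpl. apply (Hol_const alpha 0).
  - apply (Hol_plus alpha (Fs k) (u k)); auto. apply Hol_u.
Qed.

Lemma Fs_sum k z : Fs (S k) z = sum_f_R0 (fun m => u m z) k.
Proof.
  induction k.
  - rewrite Fs_S. simpl. unfold Fs; simpl. ring.
  - rewrite Fs_S, IHk. simpl. auto.
Qed.

Lemma ex_series_leR (a b : nat -> R) : (forall n, Rabs (a n) <= b n) -> ex_series b -> ex_series a.
Proof. intros H1 H2; apply (@ex_series_le R_AbsRing R_CompleteNormedModule) with b; auto. Qed.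

Lemma half_pow_le1 k : (/ 2) ^ k <= 1.
Proof. induction k; simpl; [lra|]. pose proof (pow_lt (/2) k ltac:(lra)). lra. Qed.

Lemma ex_series_scalR (c : R) (a : nat -> R) : ex_series a -> ex_series (fun n => c * a n).
Proof. intros H. apply (@ex_series_scal_l R_AbsRing R_NormedModule c a H). Qed.

Lemma ex_series_geom_half : ex_series (fun n => (/ 2) ^ n).
Proof. exists (/ (1 - / 2)). apply is_series_geom. rewrite Rabs_right; lra. Qed.

Lemma Series_geom_half : Series (fun n => (/ 2) ^ n) = 2.
Proof.
  rewrite (is_series_unique _ (/ (1 - / 2))); [field|]. apply is_series_geom. rewrite Rabs_right; lra.
Qed.

Lemma ex_u z : ex_series (fun m => u m z).
Proof.
  apply ex_series_Rabs. apply (ex_series_leR _ (fun n => (/ 2) ^ n)); [|apply ex_series_geom_half].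
  intros n. rewrite Rabs_Rabsolu. apply u_bound'.
Qed.

Definition f (z : SU2) : R := Series (fun m => u m z).

Lemma Hol_f : Hol alpha f.
Proof.
  exists 6. split; [lra|]. intros z z'. unfold f.
  pose proof (hpow_ge0 (su2_dist z z') alpha) as Hh.
  assert (Eb : ex_series (fun m => 3 * (/ 2) ^ m * hpow (su2_dist z z') alpha)).
  { apply (ex_series_ext (fun m => (3 * hpow (su2_dist z z') alpha) * (/ 2) ^ m)); [intro; fixeq; ring|].
    apply ex_series_scalR, ex_series_geom_half. }
  rewrite <- Series_minus by apply ex_u.
  assert (Ea : ex_series (fun n => Rabs (u n z - u n z'))).
  { apply (ex_series_leR _ (fun m => 3 * (/ 2) ^ m * hpow (su2_dist z z') alpha)); [| exact Eb].
    intros n. rewrite Rabs_Rabsolu. apply u_hol. }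
  eapply Rle_trans; [apply Series_Rabs; auto|].
  eapply Rle_trans; [apply Series_le; [| exact Eb]|].
  - intros n; split; [apply Rabs_pos| apply u_hol].
  - rewrite (Series_ext _ (fun m => (3 * hpow (su2_dist z z') alpha) * (/ 2) ^ m)) by (intro; ring).
    rewrite (Series_scal_l (3 * hpow (su2_dist z z') alpha) (fun m => (/ 2) ^ m)), Series_geom_half. lra.
Qed.

Definition T k z := f z - Fs (S k) z.

Lemma T_series k z : T k z = Series (fun j => u (S k + j)%nat z).
Proof.
  unfold T, f. rewrite (Series_incr_n _ (S k)) by (lia || apply ex_u). simpl pred. rewrite Fs_sum. ring.
Qed.

Lemma T_bound k z : Rabs (T k z) <= 2 / (PI * BN (Nk k - 1) + 1).
Proof.
  rewrite T_series. set (c := PI * BN (Nk k - 1) + 1).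
  assert (Hc : 1 <= c) by (unfold c; pose proof PI_RGT_0; pose proof (BN_ge0 (Nk k - 1)); nra).
  assert (Eb : ex_series (fun j => / c * (/ 2) ^ j)) by (apply ex_series_scalR, ex_series_geom_half).
  assert (Hb : forall j, Rabs (u (S k + j)%nat z) <= / c * (/ 2) ^ j).
  { intros j. eapply Rle_trans; [apply u_bound|]. pose proof (Bs_after k (S k + j) ltac:(lia)). fold c in H.
    unfold Rdiv. rewrite Rmult_comm. apply Rmult_le_compat.
    - apply Rlt_le, Rinv_0_lt_compat. pose proof (Bs_ge1 (S k + j)); lra.
    - apply pow_le; lra.
    - apply Rinv_le_contravar; lra.
    - rewrite pow_add. pose proof (pow_lt (/2) j ltac:(lra)). pose proof (pow_lt (/2) k ltac:(lra)).
      simpl. pose proof (half_pow_le1 k). nra. }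
  assert (Ea : ex_series (fun j => Rabs (u (S k + j)%nat z))).
  { apply (ex_series_leR _ (fun j => / c * (/ 2) ^ j)); [| exact Eb]. intros n. rewrite Rabs_Rabsolu. apply Hb. }
  eapply Rle_trans; [apply Series_Rabs; auto|].
  eapply Rle_trans; [apply Series_le; [| exact Eb]|].
  - intros n; split; [apply Rabs_pos| apply Hb].
  - rewrite (Series_scal_l (/ c) (fun m => (/ 2) ^ m)), Series_geom_half. unfold Rdiv. lra.
Qed.

Lemma wk_val k : wk k = - amp k (Nk k) * INR (Nk k - 1) / 2.
Proof. unfold wk. apply bump_partial. apply Nk_spec. Qed.

Lemma wk_big k : INR (S k) <= Rabs (wk k).
Proof.
  rewrite wk_val. destruct (Nk_spec k) as [H1 [H2 _]].
  assert (0 <= INR (Nk k - 1)) by apply pos_INR.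
  pose proof (amp_pos k (Nk k)).
  rewrite Rabs_left1.
  2:{ unfold Rdiv. nra. }
  unfold amp. simpl pow in H2.
  assert (E : (/ 2) ^ k * 2 ^ k = 1) by (rewrite <- Rpow_mult_distr, Rinv_l, pow1 by lra; auto).
  pose proof (pow_lt (/2) k ltac:(lra)). pose proof (pow_lt 2 k ltac:(lra)).
  pose proof (Rpower_pos (INR (Nk k)) (- alpha)). pose proof (pos_INR (S k)).
  apply (Rmult_le_reg_l (2 * 2 ^ k)); [lra|].
  transitivity (2 * 2 ^ k * INR (S k)); [lra|].
  eapply Rle_trans; [exact H2|].
  right. transitivity (((/ 2) ^ k * 2 ^ k) * (INR (Nk k - 1) * Rpower (INR (Nk k)) (- alpha))).
  - rewrite E; ring.
  - field.
Qed.

Lemma choice_bound v w e : e = (if Rle_dec (Rabs w) (Rabs (v + w)) then 1 else -1) -> Rabs w <= Rabs (v + e * w).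
Proof.
  intros ->. destruct (Rle_dec _ _) as [H|H].
  - rewrite Rmult_1_l; auto.
  - assert (A : Rabs (2 * w) <= Rabs (v + -1 * w) + Rabs (v + w)).
    { replace (2 * w) with (- (v + -1 * w) + (v + w)) by ring.
      eapply Rle_trans; [apply Rabs_triang| rewrite Rabs_Ropp; lra]. }
    rewrite Rabs_mult, (Rabs_right 2) in A by lra. lra.
Qed.

Lemma big k : INR k - 1 < Rabs (partial_sum (Nk k - 1) f (xs (sched k))).
Proof.
  set (x := xs (sched k)). set (N := Nk k).
  assert (Ef : f = fun z => Fs (S k) z + T k z) by (apply functional_extensionality; intro z; unfold T; ring).
  assert (HT : Hol alpha (T k)) by (apply (Hol_minus alpha f (Fs (S k))); [apply Hol_f| apply Hol_Fs]).
  rewrite Ef, (ps_plus alpha Ha) by (auto; apply Hol_Fs).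
  assert (EF : Fs (S k) = fun z => Fs k z + u k z) by (apply functional_extensionality; intro z; apply Fs_S).
  rewrite EF, (ps_plus alpha Ha) by (apply Hol_Fs || apply Hol_u).
  assert (Eu : partial_sum (N - 1) (u k) x = ek k * wk k).
  { unfold u, N, x. rewrite bump_partial by apply Nk_spec. rewrite wk_val. field. }
  rewrite Eu. fold x N. change (partial_sum (N - 1) (Fs k) x) with (vk k).
  pose proof (choice_bound (vk k) (wk k) (ek k) eq_refl) as C.
  pose proof (wk_big k) as Wb.
  assert (TB : Rabs (partial_sum (N - 1) (T k) x) < 2).
  { eapply Rle_lt_trans; [apply (ps_bound alpha Ha _ _ _ (2 / (PI * BN (Nk k - 1) + 1))); auto; apply T_bound|].
    fold N. pose proof PI_RGT_0. pose proof (BN_ge0 (N - 1)).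
    apply (Rmult_lt_reg_r (PI * BN (N - 1) + 1)); [nra|].
    replace (PI * (2 / (PI * BN (N - 1) + 1) * BN (N - 1)) * (PI * BN (N - 1) + 1)) with (2 * (PI * BN (N - 1))) by (field; nra).
    nra. }
  rewrite S_INR in Wb.
  pose proof (Rabs_triang (vk k + ek k * wk k + partial_sum (N - 1) (T k) x) (- partial_sum (N - 1) (T k) x)).
  rewrite Rabs_Ropp in H. replace (vk k + ek k * wk k + partial_sum (N - 1) (T k) x + - partial_sum (N - 1) (T k) x) with (vk k + ek k * wk k) in H by ring.
  lra.
Qed.

End Construction.

Lemma to_nat_ge i m : (m <= Cantor.to_nat (i, m))%nat.
Proof. unfold Cantor.to_nat. lia. Qed.

Theorem theorem1 (alpha : R) (xs : nat -> SU2) :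
  0 < alpha < 1 ->
  exists f : SU2 -> R, Lip alpha f /\
    forall (i : nat) (M : R), exists N : nat, (1 <= N)%nat /\ M < Rabs (partial_sum N f (xs i)).
Proof.
  intros Ha. exists (f alpha Ha xs). split.
  - destruct (Hol_f alpha Ha xs) as [L HL]. exists L. exact HL.
  - intros i M. destruct (INR_unbounded (M + 1)) as [m Hm].
    set (l := Cantor.to_nat (i, m)).
    assert (Hs : sched l = i) by (unfold sched, l; rewrite Cantor.cancel_of_to; reflexivity).
    exists (Nk alpha Ha xs l - 1)%nat. split.
    + destruct (Nk_spec alpha Ha xs l) as [H _]. lia.
    + pose proof (big alpha Ha xs l) as B. rewrite Hs in B.
      pose proof (le_INR _ _ (to_nat_ge i m)). fold l in H. lra.
Qed.
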